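(* For $\theta>0$ and an integer $n\ge1$, let $K_n(\theta)$ be a random variable with $$P\{K_n(\theta)=k\}=|S_n^k|\frac{\theta^k}{\theta_{(n)}},\quad k=1,\dots,n,$$ where $\theta_{(n)}=\theta(\theta+1)\cdots(\theta+n-1)$ and $|S_n^k|$ is the coefficient of $\theta^k$ in $\theta_{(n)}$, and let $M(t)=E[e^{tK_n(\theta)}]$. Consider the four regimes as $\theta\to\infty$: Case A: $n$ fixed; Case B: $n=n(\theta)\to\infty$ with $\theta/n\to\infty$; Case C: $n=n(\theta)\to\infty$ with $\theta/n\to c\in(0,\infty)$; Case D: $n=n(\theta)\to\infty$ with $\theta/n\to0$. Define $\alpha(\theta)=\log\theta,\ n\log\frac\theta n,\ \theta,\ \theta\log\frac n\theta$ and $\beta(\theta)=\log\theta,\ \log\frac\theta n,\ \frac\theta n,\ 1$ in Cases A, B, C, D respectively. Then for every $t\in\mathbb R$, $$\Lambda(t)=\lim_{\theta\to\infty}\frac{1}{\alpha(\theta)}\log M(\beta(\theta)t)$$ exists and equals, in Cases A, B, C, D respectively, $$\Lambda_1(t)=\begin{cases}nt,&t>-1,\\ (t+1)-n,&\text{else},\end{cases}\qquad \Lambda_2(t)=\begin{cases}t,&t>-1,\\ -1,&\text{else},\end{cases}$$ $$\Lambda_3(t)=\frac1c\Big\{[c\log c-(1+c)\log(1+c)]+[(1+ce^{ct})\log(1+ce^{ct})-ce^{ct}\log(ce^{ct})]\Big\},\qquad \Lambda_4(t)=e^t-1.$$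
   Context: $K_n(\theta)$ is the number of distinct alleles in a random sample of size $n$ from a $PD(\theta)$ population (Ewens sampling formula). *)

(* Defs.v *)
From HB Require Import structures.
From mathcomp Require Import all_boot all_order all_algebra.
From mathcomp Require Import all_classical all_reals all_analysis.
Set Implicit Arguments. Unset Strict Implicit. Unset Printing Implicit Defensive.
Import Order.TTheory GRing.Theory Num.Theory.
Local Open Scope ring_scope.

Definition rising {R : realType} (theta : R) (n : nat) : R :=
  \prod_(i < n) (theta + i%:R).

Definition rising_poly (n : nat) : {poly nat} :=
  \prod_(i < n) ('X + (i : nat)%:P).

Definition stirling1 (n k : nat) : nat := nth 0%N (polyseq (rising_poly n)) k.

Definition Kn_pmf {R : realType} (theta : R) (n k : nat) : R :=
  (stirling1 n k)%:R * theta ^+ k / rising theta n.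

Definition Kn_mgf {R : realType} (theta : R) (n : nat) (t : R) : R :=
  \sum_(1 <= k < n.+1) expR (t * k%:R) * Kn_pmf theta n k.

Definition Lambda1 {R : realType} (n : nat) (t : R) : R :=
  if -1 < t then n%:R * t else (t + 1) - n%:R.

Definition Lambda2 {R : realType} (t : R) : R :=
  if -1 < t then t else -1.

Definition Lambda3 {R : realType} (c t : R) : R :=
  c^-1 * ((c * ln c - (1 + c) * ln (1 + c))
          + ((1 + c * expR (c * t)) * ln (1 + c * expR (c * t))
             - c * expR (c * t) * ln (c * expR (c * t)))).

Definition Lambda4 {R : realType} (t : R) : R := expR t - 1.

(* Main.v *)
Require Import Defs.
From HB Require Import structures.
From mathcomp Require Import all_boot all_order all_algebra.
From mathcomp Require Import all_classical all_reals all_analysis.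
From mathcomp Require Import zify ring lra.
Import Order.TTheory GRing.Theory Num.Theory.
Import numFieldNormedType.Exports.
Local Open Scope classical_set_scope.
Local Open Scope ring_scope.



Section Mgf.
Variable R : realType.

Definition natR : {rmorphism nat -> R} := GRing.natmul 1.

Lemma map_rising n : map_poly natR (rising_poly n) = \prod_(i < n) ('X + (i%:R)%:P).
Proof.
rewrite /rising_poly rmorph_prod; apply: eq_bigr => i _.
by rewrite rmorphD /= map_polyX map_polyC.
Qed.

Lemma size_rising n : size (map_poly natR (rising_poly n)) = n.+1.
Proof.
rewrite map_rising size_prod; last by move=> i _; rewrite -size_poly_eq0 size_XaddC.
under eq_bigr do rewrite size_XaddC.
rewrite sum_nat_const card_ord; lia.
Qed.

Lemma rising_sum (x : R) n :
  rising x n = \sum_(k < n.+1) (stirling1 n k)%:R * x ^+ k.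
Proof.
have -> : rising x n = (map_poly natR (rising_poly n)).[x].
  rewrite map_rising horner_prod; apply: eq_bigr => i _.
  by rewrite hornerD hornerX hornerC.
rewrite horner_coef size_rising; apply: eq_bigr => i _.
by rewrite coef_map.
Qed.

Lemma stirling1_n0 n : (1 <= n)%N -> (stirling1 n 0)%:R = 0 :> R.
Proof.
move=> n1.
have := rising_sum 0 n.
rewrite big_ord_recl /= expr0 mulr1 big1 ?addr0; last first.
  by move=> i _; rewrite expr0n /= mulr0.
move=> <-; rewrite /rising; case: n n1 => // n _.
by rewrite big_ord_recl /= add0r mul0r.
Qed.

Lemma mgf_eq (th s : R) n : (1 <= n)%N ->
  Kn_mgf th n s = rising (th * expR s) n / rising th n.
Proof.
move=> n1; rewrite /Kn_mgf /Kn_pmf [in RHS]rising_sum mulr_suml.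
rewrite (big_ord_recl n) /= stirling1_n0 // mul0r mul0r add0r.
rewrite big_add1 /= big_mkord; apply: eq_bigr => i _.
rewrite exprMn -expRM_natr.
by rewrite /bump /=; ring.
Qed.
End Mgf.



Section Bounds.
Variable R : realType.
Implicit Types x y : R.

Definition Fs (n : nat) x : R := \sum_(i < n) ln (x + i%:R).
Definition Gf x : R := x * ln x - x.

Lemma ln_rising x n : 0 < x -> ln (rising x n) = Fs n x.
Proof.
move=> x0; rewrite /rising /Fs; elim: n => [|n IH]; first by rewrite !big_ord0 ln1.
rewrite !big_ord_recr /= lnM ?IH // posrE.
  by apply: prodr_gt0 => i _; rewrite ltr_wpDr.
by rewrite ltr_wpDr.
Qed.

Lemma rising_gt0 x n : 0 < x -> 0 < rising x n.
Proof. by move=> x0; apply: prodr_gt0 => i _; rewrite ltr_wpDr. Qed.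

Lemma Gf_step y : 0 < y -> ln y <= Gf (y + 1) - Gf y <= ln (y + 1).
Proof.
move=> y0; rewrite /Gf.
have y10 : 0 < y + 1 by lra.
have yi : 0 < y^-1 by rewrite invr_gt0.
have y1i : 0 < (y+1)^-1 by rewrite invr_gt0.
have y1i1 : (y+1)^-1 < 1 by rewrite invf_lt1 //; lra.
have h3 : y * y^-1 = 1 by rewrite mulfV //; lra.
have h4 : (y+1) * (y+1)^-1 = 1 by rewrite mulfV //; lra.
have h1 : ln (1 + y^-1) <= y^-1 by apply: le_ln1Dx; lra.
have e1 : ln (y + 1) = ln y + ln (1 + y^-1).
  rewrite -lnM ?posrE; [|lra|lra]; congr ln; field; lra.
have h2 : ln (1 - (y+1)^-1) <= - (y+1)^-1 by apply: le_ln1Dx; lra.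
have e2 : ln y = ln (y + 1) + ln (1 - (y+1)^-1).
  rewrite -lnM ?posrE; [|lra|lra]; congr ln; field; lra.
have k1 : (y+1) * ln (1 - (y+1)^-1) <= -1.
  have : (y+1) * ln (1 - (y+1)^-1) <= (y+1) * - (y+1)^-1 by rewrite ler_pM2l.
  by rewrite mulrN h4.
have k2 : y * ln (1 + y^-1) <= 1.
  have : y * ln (1 + y^-1) <= y * y^-1 by rewrite ler_pM2l.
  by rewrite h3.
have q1 : y * ln (y + 1) = y * ln y + y * ln (1 + y^-1) by rewrite e1 mulrDr.
have q2 : (y+1) * ln y = (y+1) * ln (y + 1) + (y+1) * ln (1 - (y+1)^-1).
  by rewrite [in LHS]e2 mulrDr.
move: q1 q2 k1 k2; set A := ln y; set B := ln (y+1); set u := ln (1 + _); set v := ln (1 - _).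
move=> q1 q2 k1 k2.
apply/andP; split; nra.
Qed.

Lemma Fs_bounds (x : R) (n : nat) : 0 < x ->
  Gf (x + n%:R) - Gf x - (ln (x + n%:R) - ln x) <= Fs n x <= Gf (x + n%:R) - Gf x.
Proof.
move=> x0; elim: n => [|n IH].
  by rewrite /Fs big_ord0 addr0 !subrr lexx.
rewrite /Fs big_ord_recr /= -/(Fs n x).
have xn : 0 < x + n%:R by rewrite ltr_wpDr.
rewrite -natr1 addrA; have := @Gf_step _ xn => /andP[s1 s2].
move: IH => /andP[i1 i2].
apply/andP; split; lra.
Qed.

Definition phi x : R := (1 + x) * ln (1 + x) - x * ln x.

Lemma Gf_diff (N x : R) : 0 < N -> 0 < x ->
  Gf (x + N) - Gf x = N * (ln N - 1 + phi (x / N)).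
Proof.
move=> N0 x0; rewrite /Gf /phi.
have r0 : 0 < x / N by rewrite divr_gt0.
have e1 : ln (x + N) = ln N + ln (1 + x / N).
  rewrite -lnM ?posrE; [|lra|lra]; congr ln; field; lra.
have e2 : ln x = ln N + ln (x / N).
  rewrite -lnM ?posrE; [|lra|lra]; congr ln; field; lra.
have e3 : N * (x / N) = x by field; lra.
rewrite e1 e2; move: e3; set u := ln (1 + _); set v := ln (_ / _); set r := x / N.
move=> e3; clearbody u v r; rewrite -e3; ring.
Qed.

Lemma lnK_bounds (th s : R) n : 0 < th -> (1 <= n)%N ->
  n%:R * (phi (th * expR s / n%:R) - phi (th / n%:R)) - ln (1 + (th * expR s / n%:R)^-1)
  <= ln (Kn_mgf th n s) <=
  n%:R * (phi (th * expR s / n%:R) - phi (th / n%:R)) + ln (1 + (th / n%:R)^-1).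
Proof.
move=> th0 n1.
have N0 : 0 < n%:R :> R by rewrite ltr0n.
have a0 : 0 < th * expR s by rewrite mulr_gt0 // expR_gt0.
rewrite mgf_eq // ln_div ?posrE ?rising_gt0 // !ln_rising //.
have := @Fs_bounds _ n a0; have := @Fs_bounds _ n th0.
rewrite !Gf_diff //.
have ea : forall y : R, 0 < y -> ln (y + n%:R) - ln y = ln (1 + (y / n%:R)^-1).
  move=> y y0; rewrite -ln_div ?posrE; [|lra|lra]; congr ln; field.
  by apply/andP; split; apply/lt0r_neq0.
rewrite !ea //.
move=> /andP[h1 h2] /andP[h3 h4].
apply/andP; split; nra.
Qed.

End Bounds.
Arguments phi {R}.
Arguments Fs {R}.
Arguments Gf {R}.



Section Aux.
Variable R : realType.
Implicit Types x y : R.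

Lemma cvg_bound {T : Type} {F : set_system T} {FF : Filter F} (f b : T -> R) l :
  (\forall x \near F, `|f x - l| <= b x) ->
  (forall e : R, 0 < e -> \forall x \near F, b x <= e) ->
  f x @[x --> F] --> l.
Proof.
move=> h1 h2; apply/cvgrPdistC_le => e e0.
by apply: filterS2 h1 (h2 e e0) => x; apply: le_trans.
Qed.

Lemma ln2_le1 : ln 2 <= 1 :> R.
Proof.
rewrite -[X in _ <= X](expRK 1) ler_ln ?posrE ?expR_gt0 //.
by have := expR_ge1Dx (1:R); lra.
Qed.

Lemma ln2_ge0 : 0 <= ln 2 :> R.
Proof. by apply: ln_ge0; lra. Qed.

Lemma lnu_pos (v : R) : 0 <= v -> v <= ln (1 + expR v) <= v + ln 2.
Proof.
move=> v0; have e0 := expR_gt0 v.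
apply/andP; split.
  by rewrite -[X in X <= _](expRK v) ler_ln ?posrE //; lra.
rewrite -[X in _ <= X + _](expRK v) addrC -lnM ?posrE //.
have : 1 <= expR v by rewrite -expR0 ler_expR.
by move=> h; rewrite ler_ln ?posrE; [nra|lra|nra].
Qed.

Lemma lnu_neg (v : R) : v <= 0 -> 0 <= ln (1 + expR v) <= ln 2.
Proof.
move=> v0; have e0 := expR_gt0 v.
have : expR v <= 1 by rewrite expR_le1.
move=> h; apply/andP; split; first by apply: ln_ge0; lra.
by rewrite ler_ln ?posrE; lra.
Qed.

Lemma phi_bounds x : 0 < x -> ln (1 + x) <= phi x <= ln (1 + x) + 1.
Proof.
move=> x0; rewrite /phi.
have xi : 0 < x^-1 by rewrite invr_gt0.
have e1 : ln (1 + x) = ln x + ln (1 + x^-1).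
  rewrite -lnM ?posrE; [|lra|lra]; congr ln; field; lra.
have h1 : ln (1 + x^-1) <= x^-1 by apply: le_ln1Dx; lra.
have h2 : 0 <= ln (1 + x^-1) by apply: ln_ge0; lra.
have h3 : x * x^-1 = 1 by rewrite mulfV //; lra.
have : x * ln (1 + x^-1) <= x * x^-1 by rewrite ler_pM2l.
rewrite h3 => h4.
have h5 : 0 <= x * ln (1 + x^-1) by rewrite mulr_ge0 //; lra.
have e2 : (1 + x) * ln (1 + x) - x * ln x = ln (1 + x) + x * ln (1 + x^-1).
  by rewrite e1; ring.
by rewrite e2; apply/andP; split; lra.
Qed.

Lemma psi_bounds x : 0 < x -> x <= (1 + x) * ln (1 + x) <= x + x ^+ 2.
Proof.
move=> x0.
have x1 : 0 < 1 + x by lra.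
have h1 : ln (1 + x) <= x by apply: le_ln1Dx; lra.
have xi : 0 < (1 + x)^-1 by rewrite invr_gt0.
have xi1 : x / (1 + x) < 1 by rewrite ltr_pdivrMr //; lra.
have h2 : ln (1 - x / (1 + x)) <= - (x / (1 + x)).
  have p : 0 < x / (1 + x) by rewrite divr_gt0.
  by apply: le_ln1Dx; lra.
have e2 : ln (1 - x / (1 + x)) = - ln (1 + x).
  rewrite -lnV ?posrE //; congr ln; field; lra.
have e3 : (1 + x) * (x / (1 + x)) = x by field; lra.
rewrite e2 in h2.
have : (1 + x) * (x / (1 + x)) <= (1 + x) * ln (1 + x) by rewrite ler_pM2l //; lra.
rewrite e3 => h3.
apply/andP; split => //.
have : (1 + x) * ln (1 + x) <= (1 + x) * x by rewrite ler_pM2l.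
by rewrite expr2; lra.
Qed.

Lemma div_bound x D l B : 0 < D -> `|x - D * l| <= B -> `|x / D - l| <= B / D.
Proof.
move=> D0 h.
have -> : x / D - l = (x - D * l) / D by field; lra.
by rewrite normrM normfV (gtr0_norm D0) ler_pM2r ?invr_gt0.
Qed.

Lemma bound2 (X Y c1 c2 e : R) : 0 < X -> 0 < Y -> 0 <= c1 -> 0 <= c2 -> 0 < e ->
  2 * c1 / e <= X -> 2 * c2 / e <= Y -> (c1 * Y + c2 * X) / (X * Y) <= e.
Proof.
move=> X0 Y0 c10 c20 e0 hX hY.
have -> : (c1 * Y + c2 * X) / (X * Y) = c1 / X + c2 / Y by field; lra.
rewrite ler_pdivrMr // in hX; rewrite ler_pdivrMr // in hY.
have h1 : c1 / X <= e / 2 by rewrite ler_pdivrMr //; nra.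
have h2 : c2 / Y <= e / 2 by rewrite ler_pdivrMr //; nra.
lra.
Qed.
End Aux.
Arguments cvg_bound {R T F FF}.
Arguments lnu_pos {R}.
Arguments lnu_neg {R}.
Arguments phi_bounds {R}.
Arguments psi_bounds {R}.
Arguments div_bound {R}.
Arguments bound2 {R}.

Section CaseB.
Variable R : realType.

Lemma caseB_point (th t : R) n : 0 < th -> (1 <= n)%N -> 1 <= ln (th / n%:R) ->
  `| ln (Kn_mgf th n (ln (th / n%:R) * t)) - n%:R * ln (th / n%:R) * Lambda2 t|
  <= 3 * n%:R + `|1 + t| * ln (th / n%:R).
Proof.
move=> th0 n1 L1.
have N0 : 0 < n%:R :> R by rewrite ltr0n.
have N1 : 1 <= n%:R :> R by rewrite ler1n.
have r0 : 0 < th / n%:R by rewrite divr_gt0.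
have := @lnK_bounds R th (ln (th / n%:R) * t) n th0 n1.
have ep : th * expR (ln (th / n%:R) * t) / n%:R = expR ((1 + t) * ln (th / n%:R)).
  by rewrite mulrDl mul1r expRD lnK ?posrE // (mulrC t) mulrAC.
rewrite ep -expRN.
set r := th / n%:R in r0 *; set L := ln r in L1 *.
have eq : r = expR L by rewrite /L lnK ?posrE.
have Hr2 : ln (1 + r^-1) = ln (1 + expR (- L)) by rewrite eq expRN.
rewrite Hr2; clearbody L r; subst r; clear Hr2 ep.
have Hr := phi_bounds _ (expR_gt0 L).
have Hp := phi_bounds _ (expR_gt0 ((1 + t) * L)).
move: Hr Hp.
set u1 := ln (1 + expR ((1 + t) * L)).
set u2 := ln (1 + expR L).
set u3 := ln (1 + expR (- ((1 + t) * L))).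
set u4 := ln (1 + expR (- L)).
set P := phi (expR ((1 + t) * L)); set Q := phi (expR L).
set M := ln (Kn_mgf _ _ _).
move=> /andP[q1 q2] /andP[p1 p2] /andP[m1 m2].
have l2 := ln2_le1 R; have l20 := ln2_ge0 R.
have L0 : 0 <= L by lra.
have /andP[a1 a2] := lnu_pos L L0.
have /andP[a3 a4] := lnu_neg (- L) (ltac:(rewrite oppr_le0 //)).
rewrite -/u2 in a1 a2; rewrite -/u4 in a3 a4.
rewrite /Lambda2; case: ifPn => ht.
  have tL : 0 <= (1 + t) * L by apply: mulr_ge0; lra.
  have /andP[b1 b2] := lnu_pos _ tL.
  have /andP[b3 b4] := lnu_neg (- ((1 + t) * L)) (ltac:(rewrite oppr_le0 //)).
  rewrite -/u1 in b1 b2; rewrite -/u3 in b3 b4.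
  have d1 : -(ln 2 + 1) <= P - Q - t * L <= ln 2 + 1.
    by apply/andP; split; nra.
  move: d1 => /andP[d1 d2].
  have e1 : n%:R * (-(ln 2 + 1)) <= n%:R * (P - Q - t * L) by rewrite ler_wpM2l //; lra.
  have e2 : n%:R * (P - Q - t * L) <= n%:R * (ln 2 + 1) by rewrite ler_wpM2l //; lra.
  have : 0 <= `|1 + t| * L by apply: mulr_ge0.
  rewrite ler_norml; move=> ?; apply/andP; split; nra.
have tL : (1 + t) * L <= 0 by apply: mulr_le0_ge0 => //; lra.
have /andP[b1 b2] := lnu_neg _ tL.
have /andP[b3 b4] := lnu_pos (- ((1 + t) * L)) (ltac:(rewrite oppr_ge0 //)).
rewrite -/u1 in b1 b2; rewrite -/u3 in b3 b4.
have d1 : -(ln 2 + 1) <= P - Q + L <= ln 2 + 1.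
  by apply/andP; split; nra.
move: d1 => /andP[d1 d2].
have e1 : n%:R * (-(ln 2 + 1)) <= n%:R * (P - Q + L) by rewrite ler_wpM2l //; lra.
have e2 : n%:R * (P - Q + L) <= n%:R * (ln 2 + 1) by rewrite ler_wpM2l //; lra.
have -> : `|1 + t| = - (1 + t) by rewrite ler0_norm //; lra.
rewrite ler_norml; apply/andP; split; nra.
Qed.
End CaseB.

Section CaseBlim.
Variable R : realType.

Lemma ln_ge_of (x A : R) : expR A <= x -> A <= ln x.
Proof.
move=> h; have x0 : 0 < x by apply: lt_le_trans h; apply: expR_gt0.
by rewrite -[X in X <= _](expRK A) ler_ln ?posrE // expR_gt0.
Qed.

Lemma caseB (n : R -> nat) :
     ((n theta)%:R : R) @[theta --> +oo] --> +oo ->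
     (theta / (n theta)%:R) @[theta --> +oo] --> +oo ->
     forall t : R,
     (ln (Kn_mgf theta (n theta) (ln (theta / (n theta)%:R) * t))
        / ((n theta)%:R * ln (theta / (n theta)%:R)))
       @[theta --> +oo] --> Lambda2 t.
Proof.
move=> hn hr t.
apply: (cvg_bound _ (fun th => (3 * (n th)%:R + `|1 + t| * ln (th / (n th)%:R))
   / ((n th)%:R * ln (th / (n th)%:R)))).
  near=> th.
  have th0 : 0 < th by near: th; apply: nbhs_pinfty_gt.
  have N1 : (1 <= (n th)%:R :> R) by near: th; exact: cvgry_ge hn 1.
  have L1 : 1 <= ln (th / (n th)%:R).
    apply: ln_ge_of; near: th; exact: cvgry_ge hr (expR 1).
  apply: div_bound; first by apply: mulr_gt0; lra.
  by apply: caseB_point => //; rewrite -(ler1n R).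
move=> e e0; near=> th.
have N1 : (1 <= (n th)%:R :> R) by near: th; exact: cvgry_ge hn 1.
have L1 : 1 <= ln (th / (n th)%:R).
  apply: ln_ge_of; near: th; exact: cvgry_ge hr (expR 1).
have Ne : 2 * `|1 + t| / e <= (n th)%:R by near: th; exact: cvgry_ge hn _.
have Le : 2 * 3 / e <= ln (th / (n th)%:R).
  apply: ln_ge_of; near: th; exact: cvgry_ge hr _.
rewrite (mulrC (n th)%:R (ln _)).
apply: bound2 => //; lra.
Unshelve. all: by end_near.
Qed.
End CaseBlim.

Section CaseD.
Variable R : realType.

Lemma caseD_point (th t : R) n : 0 < th -> (1 <= n)%N -> th / n%:R <= expR (-1) ->
  `| ln (Kn_mgf th n t) - th * ln (n%:R / th) * Lambda4 t|
  <= (ln (1 + expR (- t)) + ln 2 + 1) * ln (n%:R / th)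
     + (`|expR t - 1| + 1 + expR t ^+ 2 + expR t * `|t|) * th.
Proof.
move=> th0 n1 hr.
have N0 : 0 < n%:R :> R by rewrite ltr0n.
have := @lnK_bounds R th t n th0 n1.
have r0 : 0 < th / n%:R by rewrite divr_gt0.
have ep : th * expR t / n%:R = th / n%:R * expR t by rewrite mulrAC.
have eth : th = n%:R * (th / n%:R) by field; lra.
have el : ln (n%:R / th) = - ln (th / n%:R).
  by rewrite -lnV ?posrE // invf_div.
rewrite ep el /Lambda4.
have E0 := expR_gt0 t; have Ei : expR (- t) = (expR t)^-1 by rewrite expRN.
rewrite Ei.
have lp : ln (th / n%:R * expR t) = ln (th / n%:R) + t.
  by rewrite lnM ?posrE // expRK.
have l1 : ln (th / n%:R) <= -1.
  by rewrite -[X in _ <= X](expRK (-1)) ler_ln ?posrE // expR_gt0.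
have r1 : th / n%:R <= 1 by apply: le_trans hr _; rewrite expR_le1; lra.
have hp := psi_bounds _ (mulr_gt0 r0 E0).
have hq := psi_bounds _ r0.
have e1 : 0 <= ln (1 + (th / n%:R * expR t)^-1) <= ln (1 + (expR t)^-1) - ln (th / n%:R).
  have Ei0 : 0 < (expR t)^-1 by rewrite invr_gt0.
  have ri0 : 0 < (th / n%:R)^-1 by rewrite invr_gt0.
  apply/andP; split; first by apply: ln_ge0; rewrite lerDl invr_ge0; apply: ltW; apply: mulr_gt0.
  rewrite -lnV ?posrE // -lnM ?posrE; [|lra|lra].
  rewrite ler_ln ?posrE; [|by rewrite ltr_wpDr // ltW // invr_gt0 mulr_gt0|by apply: mulr_gt0; lra].
  rewrite invfM mulrDl mul1r.
  have : 1 <= (th / n%:R)^-1 by rewrite invf_ge1.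
  nra.
have e2 : 0 <= ln (1 + (th / n%:R)^-1) <= ln 2 - ln (th / n%:R).
  have ri0 : 0 < (th / n%:R)^-1 by rewrite invr_gt0.
  apply/andP; split; first by apply: ln_ge0; lra.
  rewrite -lnV ?posrE // -lnM ?posrE; [|lra|lra].
  rewrite ler_ln ?posrE; [|lra|lra].
  have : 1 <= (th / n%:R)^-1 by rewrite invf_ge1.
  lra.
move: hp hq e1 e2; rewrite /phi lp.
set r := th / n%:R in r0 hr r1 l1 eth *.
set a := ln r in l1 *.
set E := expR t in E0 *.
set M := ln (Kn_mgf _ _ _).
set p1 := (1 + r * E) * ln (1 + r * E).
set p2 := (1 + r) * ln (1 + r).
set f1 := ln (1 + (r * E)^-1); set f2 := ln (1 + r^-1).
set K1 := ln (1 + E^-1).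
have K10 : 0 <= K1 by apply: ln_ge0; rewrite lerDl invr_ge0 ltW.
have l20 := ln2_ge0 R.
move=> /andP[q1 q2] /andP[q3 q4] /andP[g1 g2] /andP[g3 g4] /andP[m1 m2].
set C0 := `|E - 1| + 1 + E ^+ 2 + E * `|t|.
set W := p1 - p2 - r * E * t.
have a1 : - (E - 1) <= `|E - 1| by rewrite -normrN ler_norm.
have a2 : E - 1 <= `|E - 1| by rewrite ler_norm.
have a3 : - t <= `|t| by rewrite -normrN ler_norm.
have a4 : t <= `|t| by rewrite ler_norm.
have rr : r ^+ 2 <= r by rewrite expr2; nra.
have rE : (r * E) ^+ 2 <= r * E ^+ 2 by rewrite exprMn; nra.
have r00 : 0 <= r by lra.
have h1 : 0 <= r * (`|E - 1| + (E - 1)) by apply: mulr_ge0; lra.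
have h1' : 0 <= r * (`|E - 1| - (E - 1)) by apply: mulr_ge0; lra.
have h2 : 0 <= r * E ^+ 2 * (1 - r) by apply: mulr_ge0; [apply: mulr_ge0 => //; apply: sqr_ge0|lra].
have h2' : 0 <= r * E ^+ 2 by apply: mulr_ge0 => //; apply: sqr_ge0.
have h3 : 0 <= r * E * (`|t| - t) by apply: mulr_ge0; [apply: mulr_ge0; lra|lra].
have h3' : 0 <= r * E * (`|t| + t) by apply: mulr_ge0; [apply: mulr_ge0; lra|lra].
have hW1 : - (C0 * r) <= W.
  have : C0 * r + (r * E - (r + r ^+ 2) - r * E * t) =
    r * (`|E - 1| + (E - 1)) + (r - r ^+ 2) + r * E ^+ 2 + r * E * (`|t| - t).
    by rewrite /C0; ring.
  rewrite /W; lra.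
have hW2 : W <= C0 * r.
  have : C0 * r - (r * E + r * E ^+ 2 - r - r * E * t) =
    r * (`|E - 1| - (E - 1)) + r + r * E * (`|t| + t).
    by rewrite /C0; ring.
  rewrite /W; lra.
have eN : n%:R * (p1 - r * E * (a + t) - (p2 - r * a)) = n%:R * W - th * a * (E - 1).
  by rewrite /W eth; ring.
rewrite eN in m1 m2.
have w1 : n%:R * (- (C0 * r)) <= n%:R * W by rewrite ler_wpM2l //; lra.
have w2 : n%:R * W <= n%:R * (C0 * r) by rewrite ler_wpM2l //; lra.
have eC : n%:R * (C0 * r) = C0 * th by rewrite eth; ring.
have ln2 := ln2_le1 R.
rewrite ler_norml; apply/andP; split; nra.
Qed.
End CaseD.

Section CaseDlim.
Variable R : realType.

Lemma ln_inv_ge (x A : R) : 0 < x -> x <= expR (- A) -> A <= ln (x^-1).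
Proof.
move=> x0 h; rewrite lnV ?posrE // lerNr.
by rewrite -[X in _ <= X](expRK (- A)) ler_ln ?posrE // expR_gt0.
Qed.

Lemma caseD (n : R -> nat) :
     ((n theta)%:R : R) @[theta --> +oo] --> +oo ->
     (theta / (n theta)%:R) @[theta --> +oo] --> 0 ->
     forall t : R,
     (ln (Kn_mgf theta (n theta) t) / (theta * ln ((n theta)%:R / theta)))
       @[theta --> +oo] --> Lambda4 t.
Proof.
move=> hn hr t.
set c1 := ln (1 + expR (- t)) + ln 2 + 1.
set c2 := `|expR t - 1| + 1 + expR t ^+ 2 + expR t * `|t|.
have c10 : 0 <= c1.
  have := ln2_ge0 R; have : 0 <= ln (1 + expR (- t)).
    by apply: ln_ge0; rewrite lerDl expR_ge0.
  rewrite /c1; lra.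
have c20 : 0 <= c2.
  have := normr_ge0 (expR t - 1); have := sqr_ge0 (expR t).
  have := mulr_ge0 (expR_ge0 t) (normr_ge0 t); rewrite /c2; lra.
have rsmall : forall A : R, \forall th \near +oo, th / (n th)%:R <= expR (- A).
  move=> A; have e0 : 0 < expR (- A) by apply: expR_gt0.
  near=> th.
  have : `|0 - th / (n th)%:R| <= expR (- A) by near: th; exact: cvgr_dist_le _ _ hr _ e0.
  by rewrite sub0r normrN; apply: le_trans; apply: ler_norm.
apply: (cvg_bound _ (fun th => (c1 * ln ((n th)%:R / th) + c2 * th)
   / (th * ln ((n th)%:R / th)))).
  near=> th.
  have th0 : 0 < th by near: th; apply: nbhs_pinfty_gt.
  have N1 : (1 <= (n th)%:R :> R) by near: th; exact: cvgry_ge hn 1.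
  have hr1 : th / (n th)%:R <= expR (- 1) by near: th; exact: rsmall.
  have L1 : 1 <= ln ((n th)%:R / th).
    rewrite -[_ / th]invf_div; apply: ln_inv_ge => //; rewrite divr_gt0 //; lra.
  apply: div_bound; first by apply: mulr_gt0; lra.
  by apply: caseD_point => //; rewrite -(ler1n R).
move=> e e0; near=> th.
have th0 : 0 < th by near: th; apply: nbhs_pinfty_gt.
have N1 : (1 <= (n th)%:R :> R) by near: th; exact: cvgry_ge hn 1.
have hr1 : th / (n th)%:R <= expR (- (2 * c2 / e)) by near: th; exact: rsmall.
have L1 : 2 * c2 / e <= ln ((n th)%:R / th).
  rewrite -[_ / th]invf_div; apply: ln_inv_ge => //; rewrite divr_gt0 //; lra.
have hr2 : th / (n th)%:R <= expR (- 1) by near: th; exact: rsmall.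
have L2 : 1 <= ln ((n th)%:R / th).
  rewrite -[_ / th]invf_div; apply: ln_inv_ge => //; rewrite divr_gt0 //; lra.
have T1 : 2 * c1 / e <= th by near: th; apply: nbhs_pinfty_ge; exact: num_real.
apply: bound2 => //; lra.
Unshelve. all: by end_near.
Qed.
End CaseDlim.

Section CaseA.
Variable R : realType.

Lemma sum_bounds {m} (f : 'I_m -> R) lo hi : (forall i, lo <= f i <= hi) ->
  m%:R * lo <= \sum_(i < m) f i <= m%:R * hi.
Proof.
move=> h.
have e : forall c : R, \sum_(i < m) c = m%:R * c.
  by move=> c; rewrite sumr_const card_ord mulr_natl.
apply/andP; split.
  by rewrite -e; apply: ler_sum => i _; case/andP: (h i).
by rewrite -e; apply: ler_sum => i _; case/andP: (h i).
Qed.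

Lemma caseA_point (th t : R) m : 1 <= ln th ->
  `| ln (Kn_mgf th m.+1 (ln th * t)) - ln th * Lambda1 m.+1 t|
  <= m.+1%:R * (ln 2 + ln (1 + m.+1%:R)).
Proof.
move=> y1.
have th1 : 1 <= th.
  by rewrite -(lnK (x := th)) ?posrE; [rewrite -expR0 ler_expR; lra|
    apply: contraLR y1; rewrite -leNgt => /ln0 ->; lra].
have th0 : 0 < th by lra.
have a0 : 0 < th * expR (ln th * t) by rewrite mulr_gt0 // expR_gt0.
have ea : th * expR (ln th * t) = expR ((1 + t) * ln th).
  by rewrite mulrDl mul1r expRD lnK ?posrE // (mulrC t).
rewrite mgf_eq // ln_div ?posrE ?rising_gt0 // !ln_rising // /Fs.
rewrite !big_ord_recl /= !addr0 ea.
set y := ln th in y1 ea *.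
have l0 : ln (expR ((1 + t) * y)) - ln th = t * y.
  by rewrite expRK /y; ring.
set S1 := \sum_(i < m) _; set S2 := \sum_(i < m) _.
have -> : ln (expR ((1 + t) * y)) + S1 - (ln th + S2) = t * y + (S1 - S2).
  by rewrite -l0; ring.
rewrite /S1 /S2 -sumrB.
set D := ln 2 + ln (1 + m.+1%:R).
have l2 := ln2_ge0 R.
set lam := if -1 < t then t else -1.
have hT : forall i : 'I_m,
  lam * y - D <= ln (expR ((1 + t) * y) + (bump 0 i)%:R) - ln (th + (bump 0 i)%:R)
  <= lam * y + D.
  move=> i.
  set k := (bump 0 i)%:R.
  have k1 : 1 <= k by rewrite /k ler1n.
  have kn : k <= m.+1%:R by rewrite /k ler_nat /bump /=; have := ltn_ord i; lia.
  have E0 := expR_gt0 ((1 + t) * y).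
  set a := expR ((1 + t) * y) in E0 *.
  have h1 : ln (1 + a) <= ln (a + k).
    by rewrite ler_ln ?posrE; lra.
  have h2 : ln (a + k) <= ln k + ln (1 + a).
    rewrite -lnM ?posrE; [|lra|lra]; rewrite ler_ln ?posrE; nra.
  have h3 : y <= ln (th + k) by rewrite ler_ln ?posrE; lra.
  have h4 : ln (th + k) <= y + ln (1 + k).
    rewrite /y -lnM ?posrE; [|lra|lra]; rewrite ler_ln ?posrE; nra.
  have h5 : ln (1 + k) <= ln (1 + m.+1%:R) by rewrite ler_ln ?posrE; lra.
  have h6 : ln k <= ln (1 + m.+1%:R) by rewrite ler_ln ?posrE; lra.
  have h7 : 0 <= ln k by apply: ln_ge0.
  rewrite /lam /D; case: ifPn => ht.
    have tL : 0 <= (1 + t) * y by apply: mulr_ge0; lra.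
    have /andP[b1 b2] := lnu_pos _ tL.
    apply/andP; split; nra.
  have tL : (1 + t) * y <= 0 by apply: mulr_le0_ge0; lra.
  have /andP[b1 b2] := lnu_neg _ tL.
  apply/andP; split; nra.
have /andP[s1 s2] := sum_bounds (fun i : 'I_m => ln (expR ((1 + t) * y) + (bump 0 i)%:R) - ln (th + (bump 0 i)%:R)) (lam * y - D) (lam * y + D) hT.
clear hT; move: s1 s2; set S := \sum_(i < m) _ => s1 s2.
have -> : Lambda1 m.+1 t = t + m%:R * lam.
  rewrite /Lambda1 /lam; case: ifPn => _; rewrite -natr1; ring.
have D0 : 0 <= D by rewrite /D; apply: addr_ge0 => //; apply: ln_ge0; rewrite lerDl.
have e1 : y * (t + m%:R * lam) = t * y + m%:R * (lam * y) by ring.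
have e2 : m.+1%:R * D = m%:R * D + D by rewrite -natr1; ring.
have mD : 0 <= m%:R * D by apply: mulr_ge0.
rewrite mulrBr in s1; rewrite mulrDr in s2.
rewrite e1 e2 ler_norml; apply/andP; split; lra.
Qed.
End CaseA.

Section CaseAlim.
Variable R : realType.
Lemma caseA (n : nat) : (1 <= n)%N -> forall t : R,
     (ln (Kn_mgf theta n (ln theta * t)) / ln theta)
       @[theta --> +oo] --> Lambda1 n t.
Proof.
case: n => // m _ t.
set B := m.+1%:R * (ln 2 + ln (1 + m.+1%:R)) : R.
have B0 : 0 <= B.
  rewrite /B; apply: mulr_ge0 => //; apply: addr_ge0; [exact: ln2_ge0|].
  by apply: ln_ge0; rewrite lerDl.
apply: (cvg_bound _ (fun th => B / ln th)).
  near=> th.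
  have y1 : 1 <= ln th.
    apply: ln_ge_of; near: th; apply: nbhs_pinfty_ge; exact: num_real.
  apply: div_bound; first lra.
  exact: caseA_point.
move=> e e0; near=> th.
have y1 : 1 <= ln th.
  apply: ln_ge_of; near: th; apply: nbhs_pinfty_ge; exact: num_real.
have y2 : B / e <= ln th.
  apply: ln_ge_of; near: th; apply: nbhs_pinfty_ge; exact: num_real.
rewrite ler_pdivrMr; last lra.
by rewrite ler_pdivrMr // in y2; nra.
Unshelve. all: by end_near.
Qed.
End CaseAlim.



Section CaseC.
Variable R : realType.

Lemma caseC_point (th t : R) n r p : 0 < th -> (1 <= n)%N ->
  r = th / n%:R -> p = r * expR (r * t) ->
  (phi p - phi r) / r - ln (1 + p^-1) / th <= ln (Kn_mgf th n (r * t)) / th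
  <= (phi p - phi r) / r + ln (1 + r^-1) / th.
Proof.
move=> th0 n1 er ep; rewrite er in ep; subst r p; set r := th / n%:R; set p := r * expR (r * t).
have N0 : 0 < n%:R :> R by rewrite ltr0n.
have r0 : 0 < r by rewrite divr_gt0.
have := @lnK_bounds R th (r * t) n th0 n1.
have -> : th * expR (r * t) / n%:R = p by rewrite /p /r mulrAC.
rewrite -/r => /andP[h1 h2].
have e : forall X Y, (n%:R * X + Y) / th = X / r + Y / th.
  by move=> X Y; rewrite /r; field; apply/andP; split; apply: lt0r_neq0.
have ti : 0 < th^-1 by rewrite invr_gt0.
apply/andP; split.
  by rewrite -mulNr -e ler_pM2r.
by rewrite -e ler_pM2r.
Qed.
End CaseC.

Section Cvg.
Variable R : realType.
Context {T : Type} {F : set_system T} {FF : Filter F}.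

Lemma cvg_ln (f : T -> R) (a : R) : 0 < a -> f x @[x --> F] --> a ->
  ln (f x) @[x --> F] --> ln a.
Proof. by move=> a0 h; apply: (continuous_cvg _ (continuous_ln a0) h). Qed.

Lemma cvg_phi (f : T -> R) (a : R) : 0 < a -> f x @[x --> F] --> a ->
  phi (f x) @[x --> F] --> phi a.
Proof.
move=> a0 h; rewrite /phi.
apply: cvgB; apply: cvgM.
- by apply: cvgD => //; apply: cvg_cst.
- by apply: cvg_ln; [lra|apply: cvgD => //; apply: cvg_cst].
- exact: h.
- exact: cvg_ln.
Qed.
End Cvg.

Lemma inv_cvg0 (R : realType) : (x^-1 : R) @[x --> +oo] --> 0.
Proof.
apply: (cvg_bound _ (fun x => x^-1)).
  near=> x; have x0 : 0 < x by near: x; apply: nbhs_pinfty_gt.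
  by rewrite subr0 gtr0_norm // invr_gt0.
move=> e e0; near=> x.
have x0 : e^-1 <= x by near: x; apply: nbhs_pinfty_ge; exact: num_real.
rewrite -(invrK e) lef_pV2 ?posrE //; rewrite invr_gt0 //; lra.
Unshelve. all: by end_near.
Qed.

Section CaseClim.
Variable R : realType.

Lemma caseC (n : R -> nat) (c : R) : 0 < c ->
     ((n theta)%:R : R) @[theta --> +oo] --> +oo ->
     (theta / (n theta)%:R) @[theta --> +oo] --> c ->
     forall t : R,
     (ln (Kn_mgf theta (n theta) ((theta / (n theta)%:R) * t)) / theta)
       @[theta --> +oo] --> Lambda3 c t.
Proof.
move=> c0 hn hr t.
have c1 : 0 < c * expR (c * t) by rewrite mulr_gt0 // expR_gt0.
have hp : (theta / (n theta)%:R * expR (theta / (n theta)%:R * t))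
    @[theta --> +oo] --> c * expR (c * t).
  apply: cvgM => //.
  apply: (continuous_cvg _ (@continuous_expR R _)).
  by apply: cvgM => //; apply: cvg_cst.
have hg : ((phi (theta / (n theta)%:R * expR (theta / (n theta)%:R * t))
            - phi (theta / (n theta)%:R)) / (theta / (n theta)%:R))
    @[theta --> +oo] --> (phi (c * expR (c * t)) - phi c) / c.
  apply: cvgM; first by apply: cvgB; apply: cvg_phi.
  by apply: cvgV => //; apply: lt0r_neq0.
have he1 : (ln (1 + (theta / (n theta)%:R * expR (theta / (n theta)%:R * t))^-1) / theta)
    @[theta --> +oo] --> ln (1 + (c * expR (c * t))^-1) * 0.
  apply: cvgM; last exact: inv_cvg0.
  apply: cvg_ln; first by have := invr_gt0 (c * expR (c * t)); rewrite c1; lra.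
  apply: cvgD; first exact: cvg_cst.
  by apply: cvgV => //; apply: lt0r_neq0.
have he2 : (ln (1 + (theta / (n theta)%:R)^-1) / theta)
    @[theta --> +oo] --> ln (1 + c^-1) * 0.
  apply: cvgM; last exact: inv_cvg0.
  apply: cvg_ln; first by have := invr_gt0 c; rewrite c0; lra.
  apply: cvgD; first exact: cvg_cst.
  by apply: cvgV => //; apply: lt0r_neq0.
have eL : (phi (c * expR (c * t)) - phi c) / c = Lambda3 c t.
  by rewrite /Lambda3 /phi; ring.
apply: squeeze_cvgr; last 2 first.
- have := cvgB hg he1; rewrite mulr0 subr0 eL; exact.
- have := cvgD hg he2; rewrite mulr0 addr0 eL; exact.
near=> th.
have th0 : 0 < th by near: th; apply: nbhs_pinfty_gt.
have N1 : (1 <= (n th)%:R :> R) by near: th; exact: cvgry_ge hn 1.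
by apply: caseC_point => //; rewrite -(ler1n R).
Unshelve. all: by end_near.
Qed.
End CaseClim.

Theorem theorem4p1 (R : realType) :
  (* Case A: n fixed *)
  (forall (n : nat), (1 <= n)%N -> forall t : R,
     (ln (Kn_mgf theta n (ln theta * t)) / ln theta)
       @[theta --> +oo] --> Lambda1 n t)
  /\
  (* Case B: n(theta) -> oo, theta / n(theta) -> oo *)
  (forall (n : R -> nat),
     ((n theta)%:R : R) @[theta --> +oo] --> +oo ->
     (theta / (n theta)%:R) @[theta --> +oo] --> +oo ->
     forall t : R,
     (ln (Kn_mgf theta (n theta) (ln (theta / (n theta)%:R) * t))
        / ((n theta)%:R * ln (theta / (n theta)%:R)))
       @[theta --> +oo] --> Lambda2 t)
  /\
  (* Case C: n(theta) -> oo, theta / n(theta) -> c in (0, oo) *)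
  (forall (n : R -> nat) (c : R), 0 < c ->
     ((n theta)%:R : R) @[theta --> +oo] --> +oo ->
     (theta / (n theta)%:R) @[theta --> +oo] --> c ->
     forall t : R,
     (ln (Kn_mgf theta (n theta) ((theta / (n theta)%:R) * t)) / theta)
       @[theta --> +oo] --> Lambda3 c t)
  /\
  (* Case D: n(theta) -> oo, theta / n(theta) -> 0 *)
  (forall (n : R -> nat),
     ((n theta)%:R : R) @[theta --> +oo] --> +oo ->
     (theta / (n theta)%:R) @[theta --> +oo] --> 0 ->
     forall t : R,
     (ln (Kn_mgf theta (n theta) t) / (theta * ln ((n theta)%:R / theta)))
       @[theta --> +oo] --> Lambda4 t).
Proof.
Proof.
split; first by move=> n n1 t; exact: caseA.
split; first by move=> n hn hr t; exact: caseB.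
split; first by move=> n c c0 hn hr t; exact: caseC.
by move=> n hn hr t; exact: caseD.
Qed.
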